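(* For every positive integer $n$ there exists a prime labeled oriented tree $\Gamma$ of Coxeter type with $n$ vertices such that the group $G(\Gamma)$ has rank $n$ (i.e. cannot be generated by fewer than $n$ elements). In particular, if $n\ge 3$ then $G(\Gamma)$ is not a one-relator group.
   Context: A labeled oriented tree (LOT) $\Gamma$ is a finite tree with vertex set $\mathbf{x}$ whose edges are oriented and each edge is labeled by a (possibly empty) word $w$ in $\mathbf{x}^{\pm1}$; for the edge $e=(x\xrightarrow{w}y)$ from $x$ to $y$ labeled $w$, set $r_e=xw(wy)^{-1}$; $G(\Gamma)=\langle\mathbf{x}\mid r_e,\ e\text{ an edge}\rangle$. $\Gamma$ is of Coxeter type if for every edge $e=(x\xrightarrow{w}y)$ every letter $z\ne x,y$ occurs in $w$ only with even exponents. A subLOT of $\Gamma$ is a subtree $\Gamma'$ such that all letters in the labels of edges of $\Gamma'$ are vertices of $\Gamma'$; $\Gamma$ is prime if it has no subLOT other than $\Gamma$ itself and single vertices. A one-relator group is a group admitting a presentation with a single relator. *)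

(* Defs.v *)
From mathcomp Require Import all_boot.
Set Implicit Arguments. Unset Strict Implicit. Unset Printing Implicit Defensive.

(* A word in X^{+-1}: a letter (x, true) is x, (x, false) is x^{-1}. *)
Definition word (X : Type) := seq (X * bool).

Definition letter_inv (X : Type) (a : X * bool) : X * bool := (a.1, ~~ a.2).

Definition winv (X : Type) (w : word X) : word X := rev (map (@letter_inv X) w).

Definition subst (X Y : Type) (f : X -> word Y) (u : word X) : word Y :=
  flatten (map (fun a => if a.2 then f a.1 else winv (f a.1)) u).

(* equality in the group < X | R >: the congruence on words generated by
   free cancellation and insertion/deletion of relators. *)
Inductive weq (X : Type) (R : word X -> Prop) : word X -> word X -> Prop :=
| weq_refl w : weq R w w
| weq_sym u v : weq R u v -> weq R v u
| weq_trans u v t : weq R u v -> weq R v t -> weq R u t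
| weq_free u a v : weq R (u ++ a :: letter_inv a :: v) (u ++ v)
| weq_rel u r v : R r -> weq R (u ++ r ++ v) (u ++ v).

Definition generated_by (X : Type) (R : word X -> Prop) (k : nat) : Prop :=
  exists g : 'I_k -> word X, forall w : word X,
    exists u : word 'I_k, weq R w (subst g u).

Definition has_rank (X : Type) (R : word X -> Prop) (n : nat) : Prop :=
  generated_by R n /\ forall k, k < n -> ~ generated_by R k.

Definition pres_hom (X Y : Type) (RX : word X -> Prop) (RY : word Y -> Prop)
  (f : X -> word Y) : Prop :=
  forall r, RX r -> weq RY (subst f r) [::].

Definition pres_iso (X Y : Type) (RX : word X -> Prop) (RY : word Y -> Prop) : Prop :=
  exists (f : X -> word Y) (g : Y -> word X),
    [/\ pres_hom RX RY f, pres_hom RY RX g,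
        (forall x, weq RX (subst g (f x)) [:: (x, true)]) &
        (forall y, weq RY (subst f (g y)) [:: (y, true)])].

Definition one_relator (X : Type) (R : word X -> Prop) : Prop :=
  exists (Y : Type) (r : word Y), pres_iso (fun w => w = r) R.

Definition edge (n : nat) := ('I_n * 'I_n * word 'I_n)%type.
Definition e_src n (e : edge n) : 'I_n := e.1.1.
Definition e_tgt n (e : edge n) : 'I_n := e.1.2.
Definition e_lab n (e : edge n) : word 'I_n := e.2.

Definition adj_in n (E : seq (edge n)) (S : {set 'I_n}) : rel 'I_n :=
  fun x y => [&& x \in S, y \in S &
    has (fun e => ((e_src e == x) && (e_tgt e == y)) ||
                  ((e_src e == y) && (e_tgt e == x))) E].

(* E is (the edge list of) a LOT with vertex set 'I_n: the underlying
   graph is a tree (connected with n - 1 edges). *)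
Definition is_LOT n (E : seq (edge n)) : Prop :=
  size E = n.-1 /\ forall x y : 'I_n, connect (adj_in E setT) x y.

Definition relator n (e : edge n) : word 'I_n :=
  (e_src e, true) :: e_lab e ++ (e_tgt e, false) :: winv (e_lab e).

Definition LOT_rels n (E : seq (edge n)) : word 'I_n -> Prop :=
  fun r => exists2 e, e \in E & r = relator e.

(* every letter z <> x, y occurs in the label only with even exponents:
   every maximal block of consecutive letters z^{+-1} has even length
   (equivalently, even total exponent). *)
Definition coxeter_type n (E : seq (edge n)) : Prop :=
  forall e, e \in E -> forall z : 'I_n, z != e_src e -> z != e_tgt e ->
    forall u v t : word 'I_n, e_lab e = u ++ v ++ t -> v != [::] ->
      all (fun a => a.1 == z) v ->
      omap fst (ohead (rev u)) != Some z ->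
      omap fst (ohead t) != Some z ->
      ~~ odd (size v).

Definition subLOT n (E : seq (edge n)) (S : {set 'I_n}) : Prop :=
  [/\ S != set0,
      (forall x y, x \in S -> y \in S -> connect (adj_in E S) x y) &
      (forall e, e \in E -> e_src e \in S -> e_tgt e \in S ->
         all (fun a => a.1 \in S) (e_lab e))].

Definition prime_LOT n (E : seq (edge n)) : Prop :=
  forall S : {set 'I_n}, subLOT E S -> #|S| = 1 \/ S = setT.

(* Main.v *)
Require Import Defs.
From mathcomp Require Import all_boot all_order all_algebra.
From mathcomp Require Import ring zify.
From Stdlib Require Import Classical ClassicalEpsilon.
Set Implicit Arguments. Unset Strict Implicit. Unset Printing Implicit Defensive.
Import GRing.Theory.

Section Words.
Variable X : Type.
Implicit Types (R : word X -> Prop) (u v w t : word X).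

Lemma letter_invK : involutive (@letter_inv X).
Proof. by case=> x b; rewrite /letter_inv /= negbK. Qed.

Lemma winv_cat u v : winv (u ++ v) = winv v ++ winv u.
Proof. by rewrite /winv map_cat rev_cat. Qed.

Lemma winvK : involutive (@winv X).
Proof. by move=> w; rewrite /winv map_rev revK (mapK letter_invK). Qed.

Lemma winv_cons a w : winv (a :: w) = winv w ++ [:: letter_inv a].
Proof. by rewrite -cat1s winv_cat. Qed.

Lemma weq_catr R u v t : weq R u v -> weq R (u ++ t) (v ++ t).
Proof.
elim=> {u v} [w|u v _ IH|u v s _ IH1 _ IH2|u a v|u r v Hr].
- exact: weq_refl.
- exact: weq_sym.
- exact: weq_trans IH2.
- rewrite -!catA /=; exact: weq_free.
- rewrite -!catA; exact: (weq_rel u _ Hr).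
Qed.

Lemma weq_catl R u v t : weq R u v -> weq R (t ++ u) (t ++ v).
Proof.
elim=> {u v} [w|u v _ IH|u v s _ IH1 _ IH2|u a v|u r v Hr].
- exact: weq_refl.
- exact: weq_sym.
- exact: weq_trans IH2.
- rewrite !catA; exact: weq_free.
- rewrite !catA -[X in weq _ X _]catA; exact: (weq_rel _ _ Hr).
Qed.

Lemma weq_cat R u u' v v' : weq R u u' -> weq R v v' -> weq R (u ++ v) (u' ++ v').
Proof. move=> H1 H2; apply: weq_trans (weq_catr _ H1) (weq_catl _ H2). Qed.

Lemma weq_cancel R w : weq R (w ++ winv w) [::].
Proof.
elim: w => [|a w IH] /=; first exact: weq_refl.
rewrite winv_cons catA.
apply: weq_trans (weq_catl [:: a] (weq_catr [:: letter_inv a] IH)) _.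
exact: (@weq_free _ R [::] a [::]).
Qed.

Lemma weq_winv R u v : weq R u v -> weq R (winv u) (winv v).
Proof.
elim=> {u v} [w|u v _ IH|u v s _ IH1 _ IH2|u a v|u r v Hr].
- exact: weq_refl.
- exact: weq_sym.
- exact: weq_trans IH2.
- rewrite !winv_cat !winv_cons -!catA /= letter_invK.
  exact: weq_free.
- rewrite !winv_cat -catA; apply: weq_catl.
  have H0 : weq R (winv r) [::].
    apply: weq_trans (weq_sym (@weq_rel _ R [::] r (winv r) Hr)) _.
    exact: weq_cancel.
  exact: (weq_catr _ H0).
Qed.

End Words.
Section Subst.
Variable X : Type.
Implicit Types (u v w t : word X).
Lemma subst_cat Y (f : X -> word Y) u v : subst f (u ++ v) = subst f u ++ subst f v.
Proof. by rewrite /subst map_cat flatten_cat. Qed.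

Lemma subst_cons Y (f : X -> word Y) a u :
  subst f (a :: u) = (if a.2 then f a.1 else winv (f a.1)) ++ subst f u.
Proof. by []. Qed.

Lemma subst_winv Y (f : X -> word Y) w : subst f (winv w) = winv (subst f w).
Proof.
elim: w => [|a w IH]; first by [].
rewrite winv_cons subst_cat IH [subst f (a :: w)]subst_cons winv_cat; congr (_ ++ _).
case: a => x [] /=; rewrite /subst /= ?cats0 //.
by rewrite winvK.
Qed.

Lemma subst_id w : subst (fun x => [:: (x, true)]) w = w.
Proof. by elim: w => [|[x []] w IH] //=; rewrite subst_cons IH. Qed.

Lemma weq_subst_pt Y (RY : word Y -> Prop) (f g : X -> word Y) w :
  (forall x, weq RY (f x) (g x)) -> weq RY (subst f w) (subst g w).
Proof.
move=> H; elim: w => [|[x b] w IH]; first exact: weq_refl.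
rewrite !subst_cons; apply: weq_cat IH; case: b => /=; first exact: H.
exact: weq_winv.
Qed.

End Subst.

Lemma subst_comp X Y Z (f : X -> word Y) (g : Y -> word Z) w :
  subst g (subst f w) = subst (fun x => subst g (f x)) w.
Proof.
elim: w => [|[x b] w IH] //=.
rewrite !subst_cons subst_cat IH; case: b => //=.
by rewrite subst_winv.
Qed.

Section ES.
Local Open Scope ring_scope.

Definition es T (phi : T -> rat) (w : word T) : rat :=
  \sum_(a <- w) (if a.2 then phi a.1 else - phi a.1).

Lemma es_nil T (phi : T -> rat) : es phi [::] = 0.
Proof. by rewrite /es big_nil. Qed.
Lemma es_cons T (phi : T -> rat) a w :
  es phi (a :: w) = (if a.2 then phi a.1 else - phi a.1) + es phi w.
Proof. by rewrite /es big_cons. Qed.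
Lemma es_cat T (phi : T -> rat) u v : es phi (u ++ v) = es phi u + es phi v.
Proof. by rewrite /es big_cat. Qed.

Lemma es_winv T (phi : T -> rat) w : es phi (winv w) = - es phi w.
Proof.
elim: w => [|[x b] w IH]; first by rewrite /winv /= es_nil oppr0.
rewrite winv_cons es_cat IH es_cons es_cons es_nil /=.
by case: b => /=; ring.
Qed.

Lemma es_weq T (R : word T -> Prop) (phi : T -> rat) u v :
  (forall r, R r -> es phi r = 0) -> weq R u v -> es phi u = es phi v.
Proof.
move=> HR; elim=> {u v} [w|u v _ IH|u v s _ IH1 _ IH2|u a v|u r v Hr] //.
- by rewrite IH1.
- rewrite !es_cat !es_cons /=; case: a => x [] /=; ring.
- by rewrite !es_cat (HR r Hr) add0r.
Qed.

Lemma es_subst X Y (phi : Y -> rat) (h : X -> word Y) u :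
  es phi (subst h u) = es (fun x => es phi (h x)) u.
Proof.
elim: u => [|[x b] u IH]; first by rewrite /subst /= !es_nil.
rewrite subst_cons es_cat IH es_cons; case: b => //=.
by rewrite es_winv.
Qed.

Lemma es_lin3 T (p1 p2 p3 : rat) (f1 f2 f3 : T -> rat) w :
  es (fun x => p1 * f1 x + p2 * f2 x + p3 * f3 x) w =
  p1 * es f1 w + p2 * es f2 w + p3 * es f3 w.
Proof.
elim: w => [|[x b] w IH]; first by rewrite !es_nil !mulr0 !addr0.
rewrite !es_cons IH; case: b => /=; ring.
Qed.

Lemma es_const T (c : rat) w : es (fun _ : T => c) w = c * es (fun _ => 1) w.
Proof.
elim: w => [|[x b] w IH]; first by rewrite !es_nil mulr0.
by rewrite !es_cons IH; case: b => /=; ring.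
Qed.

End ES.

Section H.
Local Open Scope ring_scope.

Variable n : nat.
Definition F3 := 'F_3.
Definition Hel := ('rV[F3]_n * bool)%type.
Definition sgn (b : bool) (v : 'rV[F3]_n) := if b then - v else v.
Definition hmul (p q : Hel) : Hel := (p.1 + sgn p.2 q.1, p.2 (+) q.2).
Definition hinv (p : Hel) : Hel := (- sgn p.2 p.1, p.2).
Definition h1 : Hel := (0, false).
Definition hl (x : 'I_n) : Hel := ('e_x, true).
Definition ev (w : word 'I_n) : Hel := foldr (fun a p => hmul (hl a.1) p) h1 w.

Lemma hmulA p q r : hmul p (hmul q r) = hmul (hmul p q) r.
Proof.
case: p => v [] ; case: q => w [] ; case: r => z c; rewrite /hmul /sgn /= ?addbA //;
  by rewrite ?negbK ?opprD ?opprK ?addrA.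
Qed.
Lemma hmul1p p : hmul h1 p = p.
Proof. by case: p => v b; rewrite /hmul /= add0r. Qed.
Lemma hmulp1 p : hmul p h1 = p.
Proof. by case: p => v [] ; rewrite /hmul /sgn /= ?oppr0 addr0 ?addbF. Qed.
Lemma hmulV p : hmul p (hinv p) = h1.
Proof. by case: p => v [] ; rewrite /hmul /hinv /sgn /= ?opprK ?addrN ?addbb. Qed.
Lemma hinvM p q : hinv (hmul p q) = hmul (hinv q) (hinv p).
Proof.
case: p => v [] ; case: q => w []; rewrite /hmul /hinv /sgn /= ?opprD ?opprK //;
  by rewrite addrC.
Qed.
Lemma hlK x : hmul (hl x) (hl x) = h1.
Proof. by rewrite /hmul /hl /sgn /= addrN. Qed.
Lemma hinv_hl x : hinv (hl x) = hl x.
Proof. by rewrite /hinv /hl /sgn /= opprK. Qed.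

Lemma ev_cat u v : ev (u ++ v) = hmul (ev u) (ev v).
Proof. elim: u => [|a u IH] /=; first by rewrite hmul1p. by rewrite IH hmulA. Qed.

Lemma ev_one a : ev [:: a] = hl a.1.
Proof. by rewrite /= hmulp1. Qed.

Lemma ev_winv w : ev (winv w) = hinv (ev w).
Proof.
elim: w => [|a w IH]; first by rewrite /= /hinv /= oppr0.
rewrite winv_cons ev_cat IH ev_one [ev (a :: w)]/= hinvM; congr hmul.
by rewrite hinv_hl.
Qed.

Lemma ev_weq (R : word 'I_n -> Prop) u v :
  (forall r, R r -> ev r = h1) -> weq R u v -> ev u = ev v.
Proof.
move=> HR; elim=> {u v} [w|u v _ IH|u v s _ IH1 _ IH2|u a v|u r v Hr] //.
- by rewrite IH1.
- by rewrite !ev_cat /= /letter_inv /= [hmul (hl _) _]hmulA hlK hmul1p.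
- by rewrite !ev_cat (HR r Hr) hmul1p.
Qed.

Lemma rank_lb (R : word 'I_n -> Prop) (HR : forall r, R r -> ev r = h1)
  (Z : Type) (m : nat) (e : 'I_m -> Z) (surj : forall z, exists i, e i = z)
  (h : Z -> word 'I_n) (Hgen : forall w, exists u, weq R w (subst h u)) :
  (n <= m)%N.
Proof.
pose D := \matrix_(i < m) (ev (h (e i))).1.
have Dh : forall z, ((ev (h z)).1 <= D)%MS.
  move=> z; have [i <-] := surj z; apply: (eq_row_sub i).
  by rewrite rowK.
have sgnD : forall b v, (v <= D)%MS -> (sgn b v <= D)%MS.
  by move=> [] v Hv //=; rewrite eqmx_opp.
have inv : forall u, ((ev (subst h u)).1 <= D)%MS.
  elim=> [|[z b] u IH]; first exact: sub0mx.
  rewrite subst_cons ev_cat /=; apply: addmx_sub; last exact: sgnD.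
  case: b => /=; first exact: Dh.
  rewrite ev_winv /hinv /= eqmx_opp; exact: sgnD.
have eD : (1%:M <= D)%MS.
  apply/row_subP => x; rewrite row1.
  have [u Hu] := Hgen [:: (x, true)].
  have := ev_weq HR Hu; rewrite ev_one => E; have := inv u; by rewrite -E.
have := mxrankS eD; rewrite mxrank1 => /leq_trans; apply; exact: rank_leq_row.
Qed.
End H.


Lemma block_lemma (T : eqType) (pre post u v t : seq (T * bool)) (z : T) (d : T * bool) :
  all (fun a => a.1 != z) pre -> all (fun a => a.1 != z) post -> d.1 != z ->
  pre ++ [:: (z, true); (z, true)] ++ post = u ++ v ++ t ->
  v != [::] -> all (fun a => a.1 == z) v ->
  omap fst (ohead (rev u)) != Some z ->
  omap fst (ohead t) != Some z -> size v = 2.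
Proof.
move=> Hpre Hpost Hd Es Hv Hvz Hu Ht.
set s := u ++ v ++ t in Es.
pose f i := (nth d s i).1 == z.
have Hf : forall i, f i = (i == size pre) || (i == (size pre).+1).
  move=> i; rewrite /f -Es nth_cat.
  case: ltnP => Hi.
    rewrite (negbTE (allP Hpre _ (mem_nth d Hi))).
    by rewrite (ltn_eqF Hi) (ltn_eqF (leq_trans Hi (leqnSn _))).
  have [j ->] : exists j, i = size pre + j by exists (i - size pre); rewrite subnKC.
  rewrite addKn; case: j => [|[|j]] /=.
  - by rewrite addn0 !eqxx.
  - by rewrite addn1 !eqxx orbT.
  have -> : (size pre + j.+2 == size pre) || (size pre + j.+2 == (size pre).+1) = false.
    by apply/negbTE/negP => /orP[]/eqP; lia.
  case: (ltnP j (size post)) => Hj.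
    by rewrite (negbTE (allP Hpost _ (mem_nth d Hj))).
  by rewrite nth_default // (negbTE Hd).
have F1 : f (size u).
  have Hsz : (0 < size v)%N by rewrite lt0n size_eq0.
  rewrite /f /s nth_cat ltnn subnn nth_cat Hsz; exact: (allP Hvz _ (mem_nth d Hsz)).
have F2 : (0 < size u)%N -> ~~ f (size u).-1.
  move=> Hu0.
  have [x0 [u0 Ex]] : exists x0 u0, u = x0 :: u0 by case: (u) Hu0 => [|x0 u0] //; exists x0, u0.
  have Eu : u = rcons (belast x0 u0) (last x0 u0) by rewrite Ex lastI.
  rewrite /f /s Eu size_rcons /= -cats1 -catA nth_cat ltnn subnn /=.
  move: Hu; rewrite Eu rev_rcons /=; by apply: contra => /eqP ->.
have F3 : ~~ f (size u + size v).
  rewrite /f /s nth_cat ltnNge leq_addr /= addKn nth_cat ltnn subnn.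
  case: (t) Ht => [|c t'] /=; last by apply: contra => /eqP ->.
  by move=> _; exact: Hd.
have F4 : forall i, (i < size v)%N -> f (size u + i).
  move=> i Hi; rewrite /f /s nth_cat ltnNge leq_addr /= addKn nth_cat Hi.
  exact: (allP Hvz _ (mem_nth d Hi)).
have Eu : size u = size pre.
  move: F1; rewrite Hf => /orP [/eqP //|/eqP Eu].
  have H0 : (0 < size u)%N by rewrite Eu.
  by move: (F2 H0); rewrite Hf Eu /= eqxx.
have Hsz : (0 < size v)%N by rewrite lt0n size_eq0.
have Hle : (size v <= 2)%N.
  rewrite leqNgt; apply/negP => H3; have := F4 2 H3; rewrite Hf Eu => /orP[]/eqP; lia.
have Hne1 : size v != 1%N.
  by apply/eqP => H1; move: F3; rewrite Hf Eu H1 addn1 !eqxx orbT.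
move: Hle Hne1 Hsz; lia.
Qed.


Section Key.
Local Open Scope ring_scope.
Variable n : nat.
Lemma F3_three (x : F3) : x + x + x = 0.
Proof.
have -> : x + x + x = x * (1 + 1 + 1) by ring.
by rewrite (_ : (1 + 1 + 1 : F3) = 0) ?mulr0 //; apply/eqP.
Qed.

Lemma key (a b : 'rV[F3]_n) :
  let p := (a, true) in let q := (b, true) in
  let T := hmul p (hmul q (hmul p (hmul q (h1 n)))) in
  hmul p (hmul T (hmul q (hinv T))) = h1 n.
Proof.
rewrite /hmul /hinv /sgn /h1 /=; congr (_, _).
apply/matrixP => i j; rewrite !mxE.
move: (a i j) (b i j) => x y.
transitivity ((y - x) + (y - x) + (y - x)); first by ring.
exact: F3_three.
Qed.
End Key.


Section LOT.
Variable k : nat.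
Local Notation n := k.+1.
Local Notation V := 'I_n.

Definition pair2 (z : V) : word V := [:: (z, true); (z, true)].
Definition sq : word V := flatten [seq pair2 z | z <- enum V].
Definition tl (x y : V) : word V := [:: (x, true); (y, true); (x, true); (y, true)].
Definition lab (x y : V) : word V := sq ++ tl x y.
Definition mkE (i : nat) : edge n := (inord i, inord i.+1, lab (inord i) (inord i.+1)).
Definition EE : seq (edge n) := [seq mkE i | i <- iota 0 k].

Lemma EEP e : e \in EE -> exists2 i, (i < k)%N & e = mkE i.
Proof. by case/mapP => i; rewrite mem_iota add0n => /andP[_ Hi] ->; exists i. Qed.

Lemma adj_sym S : symmetric (adj_in EE S).
Proof.
move=> x y; rewrite /adj_in; apply/idP/idP => /and3P[Hx Hy Hh]; rewrite Hx Hy /=;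
  apply: sub_has Hh => e /=; by rewrite orbC.
Qed.

Lemma adj_step i : (i < k)%N -> adj_in EE setT (inord i) (inord i.+1).
Proof.
move=> Hi; rewrite /adj_in !inE /=; apply/hasP; exists (mkE i).
  by apply: map_f; rewrite mem_iota add0n Hi.
by rewrite /e_src /e_tgt /= !eqxx.
Qed.

Lemma is_LOT_EE : is_LOT EE.
Proof.
split; first by rewrite size_map size_iota.
have H0 : forall i, (i <= k)%N -> connect (adj_in EE setT) ord0 (inord i).
  elim=> [|i IH] Hi.
    by rewrite (_ : inord 0 = ord0) //; apply: val_inj; rewrite /= inordK.
  apply: connect_trans (IH (ltnW Hi)) _; apply: connect1; exact: adj_step.
move=> x y; apply: (@connect_trans _ _ ord0).
  rewrite (sym_connect_sym (adj_sym _)) -(inord_val x); apply: H0; by rewrite -ltnS.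
rewrite -(inord_val y); apply: H0; by rewrite -ltnS.
Qed.

Lemma mem_lab x y z : (z, true) \in lab x y.
Proof.
rewrite mem_cat; apply/orP; left; apply/flatten_mapP; exists z; first exact: mem_enum.
by rewrite !inE eqxx.
Qed.

Lemma prime_EE : prime_LOT EE.
Proof.
move=> S [SN0 Sconn Slab].
case: (ltnP 1 #|S|) => [/card_gt1P [x [y [Hx Hy Hxy]]]|H1]; last first.
  left; apply/eqP; rewrite eqn_leq H1 /= card_gt0; exact: SN0.
right; have /connectP [p Hp Hl] := Sconn x y Hx Hy.
case: p Hp Hl => [|x' p] /=; first by move=> _ E; rewrite E eqxx in Hxy.
case/andP => /and3P [Sx Sx' /hasP [e He He2]] _ _.
have [Hs Ht] : e_src e \in S /\ e_tgt e \in S.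
  by case/orP: He2 => /andP [/eqP -> /eqP ->].
have := Slab e He Hs Ht; have [i _ ->] := EEP He => /allP Hall.
apply/setP => z; rewrite inE; exact: (Hall (z, true) (mem_lab _ _ _)).
Qed.
End LOT.


Section LOT2.
Variable k : nat.
Local Notation n := k.+1.
Local Notation V := 'I_n.

Lemma coxeter_EE : coxeter_type (EE k).
Proof.
move=> e He z Hzs Hzt u v t El Hv Hvz Hu Ht.
have [i _ Ee] := EEP He; subst e.
move: Hzs Hzt El; rewrite /e_src /e_tgt /e_lab /=.
set x := inord i; set y := inord i.+1 => Hzx Hzy El.
have [pre' [post' Es]] : exists pre' post', enum V = pre' ++ z :: post'.
  exists (take (index z (enum V)) (enum V)), (drop (index z (enum V)).+1 (enum V)).
  by rewrite -{1}(cat_take_drop (index z (enum V)) (enum V)) (drop_nth z)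
     ?index_mem ?mem_enum // nth_index // mem_enum.
have := enum_uniq V; rewrite Es cat_uniq /= => /and3P [_ Hpre /andP [Hpost _]].
have Hpre' : z \notin pre' by apply: contra Hpre => Hz; by rewrite /= Hz.
have nz : forall l, z \notin l -> all (fun a : V * bool => a.1 != z) (flatten [seq pair2 w | w <- l]).
  move=> l Hl; apply/allP => a /flatten_mapP [w Hw]; rewrite !inE => /orP [] /eqP -> /=;
  by apply: contraNneq Hl => <-.
have Hsz : size v = 2.
  apply: (@block_lemma _ (flatten [seq pair2 w | w <- pre'])
            (flatten [seq pair2 w | w <- post'] ++ tl x y) u v t z (x, true)) => //.
  - exact: nz.
  - rewrite all_cat nz //=; by rewrite eq_sym Hzx eq_sym Hzy.
  - by rewrite eq_sym.
  - by rewrite -El /lab /sq Es map_cat flatten_cat /= -!catA.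
by rewrite Hsz.
Qed.

Lemma ev_pairs (l : seq V) : ev (flatten [seq pair2 w | w <- l]) = h1 n.
Proof.
elim: l => [|w l IH]; first by [].
have -> : flatten [seq pair2 w | w <- w :: l] = pair2 w ++ flatten [seq pair2 w | w <- l] by [].
rewrite ev_cat IH hmulp1 /pair2 -cat1s ev_cat !ev_one /=.
exact: hlK.
Qed.

Lemma ev_rel e : e \in EE k -> ev (relator e) = h1 n.
Proof.
case/EEP => i _ ->; rewrite /relator /e_src /e_tgt /e_lab /mkE /=.
set x := inord i; set y := inord i.+1.
rewrite ev_cat /= ev_winv /lab ev_cat /sq ev_pairs hmul1p.
exact: (key 'e_x 'e_y).
Qed.
End LOT2.


Section Aux.
Local Open Scope ring_scope.

Lemma ker_nz (A : 'M[rat]_(3,2)) : exists p : 'rV[rat]_3, p != 0 /\ p *m A = 0.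
Proof.
set K := kermx A.
have HK : K != 0.
  rewrite -mxrank_eq0 /K mxrank_ker; have := rank_leq_col A; lia.
case: (pickP (fun i => row i K != 0)) => [i Hi|Hn].
  exists (row i K); split => //; by rewrite -row_mul mulmx_ker row0.
exfalso; move/negP: HK; apply; apply/eqP/row_matrixP => i.
by move: (Hn i) => /= /negbFE /eqP ->; rewrite row0.
Qed.

Lemma es_zero T (psi : T -> rat) w : (forall x, psi x = 0) -> es psi w = 0.
Proof.
move=> H; elim: w => [|[x b] w IH]; first exact: es_nil.
by rewrite es_cons IH H; case: b; rewrite /= ?oppr0 addr0.
Qed.

Lemma es_relator n (psi : 'I_n -> rat) e :
  es psi (relator e) = psi (e_src e) - psi (e_tgt e).
Proof. rewrite /relator es_cons es_cat es_cons es_winv /=; ring. Qed.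

Definition delta (Y : Type) (a : Y) : Y -> rat :=
  fun y => if excluded_middle_informative (y = a) then 1 else 0.

Lemma delta_eq Y (a : Y) : delta a a = 1.
Proof. by rewrite /delta; case: excluded_middle_informative. Qed.
Lemma delta_neq Y (a y : Y) : y <> a -> delta a y = 0.
Proof. by rewrite /delta; case: excluded_middle_informative. Qed.

End Aux.

Lemma small_type (Y : Type) :
  ~ (exists y1 y2 y3 : Y, [/\ y1 <> y2, y1 <> y3 & y2 <> y3]) ->
  exists m, (m <= 2)%N /\ exists e : 'I_m -> Y, forall z, exists i, e i = z.
Proof.
move=> H.
case: (classic (exists y : Y, True)) => [[y1 _]|Hn].
  case: (classic (forall y, y = y1)) => [Hall|Hn1].
    exists 1%N; split => //; exists (fun _ => y1) => z; exists ord0; by rewrite (Hall z).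
  have [y2 Hy2] : exists y2, y2 <> y1 by apply: not_all_ex_not.
  exists 2%N; split => //; exists (fun i : 'I_2 => if val i == 0%N then y1 else y2) => z.
  case: (classic (z = y1)) => [Ez|Hz1]; first by exists ord0; rewrite Ez.
  case: (classic (z = y2)) => [Ez|Hz2]; first by exists (@Ordinal 2 1 isT); rewrite Ez.
  exfalso; apply: H; exists y1, y2, z; split => // E; [exact: Hy2 | exact: Hz1 | exact: Hz2].
exists 0%N; split => //.
have e0 : 'I_0 -> Y by case=> m; rewrite ltn0.
exists e0 => z; exfalso; apply: Hn; by exists z.
Qed.


Theorem corollary3p3 :
  forall n : nat, 0 < n ->
    exists E : seq (edge n),
      [/\ is_LOT E, prime_LOT E, coxeter_type E,
          has_rank (LOT_rels E) n &
          (3 <= n -> ~ one_relator (LOT_rels E))].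
Proof.
case=> // k _; exists (EE k).
set R := LOT_rels (EE k).
have HR : forall r, R r -> ev r = h1 k.+1 by move=> r [e He ->]; exact: ev_rel.
have Hrank : has_rank R k.+1.
  split.
    exists (fun i => [:: (i, true)]) => w; exists w; rewrite subst_id; exact: weq_refl.
  move=> j Hj [g Hg].
  have := @rank_lb _ R HR 'I_j j id (fun z => ex_intro _ z erefl) g Hg.
  by rewrite leqNgt Hj.
split => //; [exact: is_LOT_EE | exact: prime_EE | exact: coxeter_EE |].
move=> H3 [Y [r [f [g [Hf Hg Hgf Hfg]]]]].
have Hgen : forall w, exists u, weq R w (subst f u).
  move=> w; exists (subst g w); rewrite subst_comp; apply: weq_sym.
  rewrite -[X in weq _ _ X]subst_id; exact: weq_subst_pt.
case: (classic (exists y1 y2 y3 : Y, [/\ y1 <> y2, y1 <> y3 & y2 <> y3])); last first.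
  move/small_type => [m [Hm [e He]]].
  have := rank_lb HR He Hgen; lia.
move=> [y1 [y2 [y3 [H12 H13 H23]]]].
pose i0 := @Ordinal 3 0 isT; pose i1 := @Ordinal 3 1 isT; pose i2 := @Ordinal 3 2 isT.
pose ys (i : 'I_3) : Y := if val i == 0%N then y1 else if val i == 1%N then y2 else y3.
pose A : 'M[rat]_(3,2) := (\matrix_(i, j) es (delta (ys i)) (if val j == 0%N then r else g ord0))%R.
have [p [Hp0 HpA]] := ker_nz A.
pose phi y := (p ord0 i0 * delta y1 y + p ord0 i1 * delta y2 y + p ord0 i2 * delta y3 y)%R.
have Hes : forall w, es phi w = (p ord0 i0 * es (delta y1) w + p ord0 i1 * es (delta y2) w
                                + p ord0 i2 * es (delta y3) w)%R.
  by move=> w; rewrite /phi es_lin3.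
have HA : forall j, (p ord0 i0 * A i0 j + p ord0 i1 * A i1 j + p ord0 i2 * A i2 j = 0)%R.
  move=> j; have := congr1 (fun M : 'M[rat]_(1,2) => M ord0 j) HpA; rewrite !mxE => <-.
  rewrite !big_ord_recr big_ord0 /= GRing.add0r.
  have -> : widen_ord (leqnSn 2) (widen_ord (leqnSn 1) ord_max) = i0 by apply: val_inj.
  have -> : widen_ord (leqnSn 2) ord_max = i1 by apply: val_inj.
  have -> : ord_max = i2 by apply: val_inj.
  by rewrite !mxE.
have Hr0 : es phi r = 0%R.
  by rewrite Hes -(HA (@Ordinal 2 0 isT)) !mxE.
have Hg0 : es phi (g ord0) = 0%R.
  by rewrite Hes -(HA (@Ordinal 2 1 isT)) !mxE.
pose psi x := es phi (g x).
have Hedge : forall e, e \in EE k -> psi (e_src e) = psi (e_tgt e).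
  move=> e He.
  have : es psi (relator e) = 0%R.
    rewrite /psi -es_subst (@es_weq _ (fun w => w = r) _ _ [::]) ?es_nil //.
      by move=> r' ->.
    apply: Hg; by exists e.
  by rewrite es_relator => /eqP; rewrite GRing.subr_eq0 => /eqP.
have Hpsi : forall x, psi x = 0%R.
  have Hi : forall i, (i <= k)%N -> psi (inord i) = 0%R.
    elim=> [|i IH] Hi.
      by rewrite (_ : inord 0 = ord0) //; apply: val_inj; rewrite /= inordK.
    rewrite -(IH (ltnW Hi)).
    have := Hedge (mkE k i); rewrite /mkE /e_src /e_tgt /= => <- //.
    by apply: map_f; rewrite mem_iota add0n.
  by move=> x; rewrite -(inord_val x); apply: Hi; rewrite -ltnS.
have Hphi : forall y, phi y = 0%R.
  move=> y; have <- : es phi [:: (y, true)] = phi y by rewrite es_cons es_nil GRing.addr0.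
  rewrite -(@es_weq _ (fun w => w = r) phi _ _ _ (Hgf y)); last by move=> r' ->.
  by rewrite es_subst; apply: es_zero.
have P0 : p ord0 i0 = 0%R.
  have := Hphi y1; rewrite /phi delta_eq !delta_neq //.
    by rewrite !GRing.mulr0 !GRing.addr0 GRing.mulr1.
have P1 : p ord0 i1 = 0%R.
  have := Hphi y2; rewrite /phi delta_eq !delta_neq //.
    by rewrite !GRing.mulr0 GRing.add0r GRing.addr0 GRing.mulr1.
  by move=> E; apply: H12.
have P2 : p ord0 i2 = 0%R.
  have := Hphi y3; rewrite /phi delta_eq !delta_neq //.
  - by rewrite !GRing.mulr0 !GRing.add0r GRing.mulr1.
  - by move=> E; apply: H23.
  - by move=> E; apply: H13.
move/negP: Hp0; apply; apply/eqP/rowP => j; rewrite mxE.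
case: j => [[|[|[|j]]] Hj] //.
- by rewrite -P0; congr (p _ _); apply: val_inj.
- by rewrite -P1; congr (p _ _); apply: val_inj.
- by rewrite -P2; congr (p _ _); apply: val_inj.
Qed.
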